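(* Let $A(z,\lambda)\in\mathfrak{gl}_2(\mathbb{C}((z))[[\lambda]])$ and $R(z,\lambda)\in\mathrm{GL}_2(\mathbb{C}((z))[[\lambda]])$ satisfy: (1) $A$ is diagonal; (2) $R(z,0)\in\mathfrak{gl}_2(\mathbb{C}[[z]])$; (3) $\det R(z,0)\in\mathbb{C}[[z]]$ has a first-order zero at $z=0$; (4) $\tilde A:=R^{-1}AR+\lambda R^{-1}\frac{dR}{dz}\in\mathfrak{gl}_2(\mathbb{C}[[z,\lambda]])$. Then $\operatorname{res}_{z=0}\operatorname{tr}A(z,\lambda)=-\lambda$.
   Context: Residues of elements of $\mathbb{C}((z))[[\lambda]]$ are taken coefficientwise in $\lambda$. *)

(* Defs.v *)
(* C = R[i] for R : realType (a model of the real numbers). *)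
From mathcomp Require Import all_boot all_order all_algebra.
From mathcomp Require Import reals.
From mathcomp Require Export complex.
Set Implicit Arguments. Unset Strict Implicit. Unset Printing Implicit Defensive.
Import GRing.Theory Num.Theory.
Local Open Scope ring_scope.

Section LaurentSeries.
Variable K : fieldType.

(* A Laurent series in z: z^(lo f) * sum_(k >= 0) cf f k * z^k.
   (Representation is not unique; equality is always stated on coefficients.) *)
Record LS := mkLS { lo : int; cf : nat -> K }.

Definition lscoef (f : LS) (m : int) : K :=
  match (m - lo f)%R with Posz k => cf f k | Negz _ => 0 end.

Definition ls0 : LS := mkLS 0 (fun _ => 0).
Definition ls1 : LS := mkLS 0 (fun k => if k is 0%N then 1 else 0).

Definition lsadd (f g : LS) : LS :=
  let l := Order.min (lo f) (lo g) in
  mkLS l (fun k => lscoef f (l + k%:Z) + lscoef g (l + k%:Z)).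

Definition lsopp (f : LS) : LS := mkLS (lo f) (fun k => - cf f k).

Definition lsmul (f g : LS) : LS :=
  mkLS (lo f + lo g) (fun k => \sum_(i < k.+1) cf f i * cf g (k - i)%N).

Definition lsderiv (f : LS) : LS :=
  mkLS (lo f - 1) (fun k => (lo f + k%:Z)%:~R * cf f k).

(* Elements of C((z))[[lambda]]: F n is the coefficient of lambda^n. *)
Definition PS := nat -> LS.

Definition pscoef (F : PS) (n : nat) (m : int) : K := lscoef (F n) m.

Definition ps0 : PS := fun _ => ls0.
Definition ps1 : PS := fun n => if n is 0%N then ls1 else ls0.
Definition psadd (F G : PS) : PS := fun n => lsadd (F n) (G n).
Definition psopp (F : PS) : PS := fun n => lsopp (F n).
Definition psmul (F G : PS) : PS :=
  fun n => \big[lsadd/ls0]_(k < n.+1) lsmul (F k) (G (n - k)%N).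
Definition pslam (F : PS) : PS := fun n => if n is n'.+1 then F n' else ls0.
Definition psderiv (F : PS) : PS := fun n => lsderiv (F n).

Definition pseq (F G : PS) : Prop := forall n m, pscoef F n m = pscoef G n m.

Definition ps_holo (F : PS) : Prop := forall n m, (m < 0)%R -> pscoef F n m = 0.

Definition psres (F : PS) : PS := fun n => mkLS 0 (fun k => if k is 0%N then lscoef (F n) (-1) else 0).

Definition pslambda : PS := pslam ps1.

Definition M2 := 'I_2 -> 'I_2 -> PS.

Definition m2one : M2 := fun i j => if i == j then ps1 else ps0.
Definition m2add (A B : M2) : M2 := fun i j => psadd (A i j) (B i j).
Definition m2mul (A B : M2) : M2 :=
  fun i j => \big[psadd/ps0]_(k < 2) psmul (A i k) (B k j).
Definition m2lam (A : M2) : M2 := fun i j => pslam (A i j).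
Definition m2deriv (A : M2) : M2 := fun i j => psderiv (A i j).
Definition m2eq (A B : M2) : Prop := forall i j, pseq (A i j) (B i j).
Definition m2tr (A : M2) : PS := psadd (A ord0 ord0) (A ord_max ord_max).
Definition m2det (A : M2) : PS :=
  psadd (psmul (A ord0 ord0) (A ord_max ord_max))
        (psopp (psmul (A ord0 ord_max) (A ord_max ord0))).

Definition m2diag (A : M2) : Prop := forall i j, i != j -> pseq (A i j) ps0.

(* R^{-1} A R + lambda R^{-1} dR/dz, with S = R^{-1} *)
Definition gauge (S A R : M2) : M2 :=
  m2add (m2mul (m2mul S A) R) (m2lam (m2mul S (m2deriv R))).

End LaurentSeries.

(* Main.v *)
From HB Require Import structures.
Require Import Defs.
From mathcomp Require Import all_boot all_order all_algebra.
From mathcomp Require Import reals complex.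
From mathcomp Require Import ring lra zify.
From mathcomp Require Import boolp.
Set Implicit Arguments. Unset Strict Implicit. Unset Printing Implicit Defensive.
Import Order.TTheory GRing.Theory Num.Theory.
Local Open Scope ring_scope.

Section Conv.
Variable T : comNzRingType.
Definition conv (a b : nat -> T) k := \sum_(i < k.+1) a i * b (k - i)%N.
Definition trp (a : nat -> T) k : {poly T} := \poly_(i < k.+1) a i.

Lemma conv_tr a b k i : (i <= k)%N -> conv a b i = (trp a k * trp b k)`_i.
Proof.
move=> ik; rewrite coefM; apply: eq_bigr => j _.
rewrite !coef_poly; have jl := ltn_ord j.
have h1 : (j < k.+1)%N by apply: leq_trans jl _; rewrite ltnS.
have h2 : (i - j < k.+1)%N by rewrite ltnS (leq_trans (leq_subr _ _) ik).
by rewrite h1 h2.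
Qed.

Lemma convE a b k : conv a b k = (trp a k * trp b k)`_k.
Proof. exact: conv_tr. Qed.

Lemma convA a b c k : conv (conv a b) c k = conv a (conv b c) k.
Proof.
have -> : conv (conv a b) c k = (trp a k * trp b k * trp c k)`_k.
  rewrite coefM /conv; apply: eq_bigr => i _.
  have ik : (i <= k)%N by rewrite -ltnS.
  rewrite -/(conv a b i) (conv_tr _ _ ik).
  by rewrite coef_poly ltnS leq_subr.
have -> : conv a (conv b c) k = (trp a k * (trp b k * trp c k))`_k.
  rewrite [RHS]coefM /conv; apply: eq_bigr => i _.
  rewrite -/(conv b c (k - i)) (conv_tr _ _ (leq_subr i k)).
  by rewrite coef_poly ltn_ord.
by rewrite mulrA.
Qed.

Lemma convC a b k : conv a b k = conv b a k.
Proof. by rewrite !convE mulrC. Qed.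

Lemma convDl a b c k : conv (fun i => a i + b i) c k = conv a c k + conv b c k.
Proof. by rewrite /conv -big_split; apply: eq_bigr => i _; rewrite mulrDl. Qed.

Lemma convNl a c k : conv (fun i => - a i) c k = - conv a c k.
Proof. by rewrite /conv -sumrN; apply: eq_bigr => i _; rewrite mulNr. Qed.

Definition delta (i : nat) : T := if i is 0%N then 1 else 0.
Lemma conv1l a k : conv delta a k = a k.
Proof. by rewrite /conv big_ord_recl /= mul1r subn0 big1 ?addr0 // => i _; rewrite mul0r. Qed.
End Conv.

Section LSlaws.
Variable K : fieldType.
Local Notation LS := (LS K).
Implicit Types f g h : LS.

Lemma lscoef_mk l (c : nat -> K) m : lscoef (mkLS l c) m =
  match m - l with Posz k => c k | Negz _ => 0 : K end.
Proof. by []. Qed.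

Lemma lscoef_mk_ext l (c1 c2 : nat -> K) m : c1 =1 c2 -> lscoef (mkLS l c1) m = lscoef (mkLS l c2) m.
Proof. by move=> e; rewrite !lscoef_mk; case: (m - l) => // k; rewrite e. Qed.

Lemma lscoef_lo f (i : nat) : lscoef f (lo f + i%:Z) = cf f i.
Proof. by rewrite /lscoef (_ : lo f + i%:Z - lo f = i%:Z) //; lia. Qed.

Lemma lscoef_below f m : m < lo f -> lscoef f m = 0.
Proof.
move=> h; rewrite /lscoef; case E: (m - lo f) => [k|k] //.
have : m - lo f < 0 by rewrite subr_lt0.
by rewrite E.
Qed.

Lemma lscoef_mk_shift l (F : int -> K) m :
  lscoef (mkLS l (fun k => F (l + k%:Z))) m = if l <= m then F m else 0.
Proof.
rewrite lscoef_mk; case E: (m - l) => [k|k].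
  have -> : l + k%:Z = m by lia.
  by rewrite ifT //; lia.
by rewrite ifF //; apply/negbTE; lia.
Qed.

Lemma lscoef_add f g m : lscoef (lsadd f g) m = lscoef f m + lscoef g m.
Proof.
rewrite /lsadd; cbv zeta; rewrite (lscoef_mk_shift _ (fun x => lscoef f x + lscoef g x)); case: ifP => // /negbT h.
by rewrite !lscoef_below ?addr0 //; lia.
Qed.

Lemma lscoef_opp f m : lscoef (lsopp f) m = - lscoef f m.
Proof. by rewrite /lsopp lscoef_mk /lscoef /=; case: (m - lo f) => //; rewrite oppr0. Qed.

Lemma lscoef0 m : lscoef (ls0 K) m = 0.
Proof. by rewrite /ls0 lscoef_mk; case: (m - 0). Qed.

Lemma lscoef1 m : lscoef (ls1 K) m = (m == 0)%:R.
Proof.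
rewrite /ls1 lscoef_mk subr0; case: m => [[|k]|k] //.
Qed.

Lemma lscoef_mul_raw f g m : lscoef (lsmul f g) m =
  match m - (lo f + lo g) with Posz k => conv (cf f) (cf g) k | Negz _ => 0 end.
Proof. by []. Qed.

Definition V (F G : int -> K) (a m : int) (N : nat) :=
  \sum_(i < N) F (a + i%:Z) * G (m - a - i%:Z).

Lemma V_ext F G a m N0 N :
  (N0 <= N)%N -> (forall i : nat, (N0 <= i)%N -> F (a + i%:Z) * G (m - a - i%:Z) = 0) ->
  V F G a m N = V F G a m N0.
Proof.
move=> hN hz; rewrite /V [RHS](big_ord_widen N (fun i : nat => F (a + i%:Z) * G (m - a - i%:Z)) hN).
rewrite [RHS]big_mkcond; apply: eq_bigr => i _.
by case: ifP => // /negbT; rewrite -leqNgt => /hz ->.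
Qed.

Lemma V_shift F G a m (d N : nat) :
  (forall i : nat, (i < d)%N -> F (a + i%:Z) = 0) ->
  V F G a m (d + N) = V F G (a + d%:Z) m N.
Proof.
move=> hz; rewrite /V big_split_ord /= big1 ?add0r.
  apply: eq_bigr => i _; congr (F _ * G _); lia.
by move=> i _; rewrite hz ?mul0r.
Qed.

Lemma V_canon f g m : exists N : nat, m - lo f - lo g < N%:Z /\
  lscoef (lsmul f g) m = V (lscoef f) (lscoef g) (lo f) m N.
Proof.
rewrite lscoef_mul_raw; case E: (m - (lo f + lo g)) => [k|k].
  exists k.+1; split; first by lia.
  rewrite /V /conv; apply: eq_bigr => -[i hi] _ /=.
  rewrite lscoef_lo; congr (_ * _).
  have -> : m - lo f - i%:Z = lo g + (k - i)%N%:Z by lia.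
  by rewrite lscoef_lo.
by exists 0%N; split; [lia | rewrite /V big_ord0].
Qed.

Lemma V_any f g m a b N :
  (forall j, j < a -> lscoef f j = 0) -> (forall j, j < b -> lscoef g j = 0) ->
  m - a - b < N%:Z ->
  lscoef (lsmul f g) m = V (lscoef f) (lscoef g) a m N.
Proof.
move=> ha hb hN.
have [Nc [hNc ->]] := V_canon f g m.
set a1 := Order.min a (lo f).
have [d hd] : exists d : nat, a = a1 + d%:Z by exists `|a - a1|%N; lia.
have [d' hd'] : exists d : nat, lo f = a1 + d%:Z by exists `|lo f - a1|%N; lia.
have -> : V (lscoef f) (lscoef g) a m N = V (lscoef f) (lscoef g) a1 m (d + N).
  rewrite V_shift -?hd // => i hi; apply: ha; lia.
have -> : V (lscoef f) (lscoef g) (lo f) m Nc = V (lscoef f) (lscoef g) a1 m (d' + Nc).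
  rewrite V_shift -?hd' // => i hi; apply: lscoef_below; lia.
rewrite -(@V_ext _ _ _ _ (d + N) (maxn (d + N) (d' + Nc))) ?leq_maxl //; last first.
  by move=> i hi; rewrite (hb _) ?mulr0 //; lia.
rewrite -(@V_ext _ _ _ _ (d' + Nc) (maxn (d + N) (d' + Nc))) ?leq_maxr //.
by move=> i hi; rewrite (@lscoef_below g) ?mulr0 //; lia.
Qed.

Lemma lsmul_wd f1 f2 g1 g2 : lscoef f1 =1 lscoef f2 -> lscoef g1 =1 lscoef g2 ->
  lscoef (lsmul f1 g1) =1 lscoef (lsmul f2 g2).
Proof.
move=> ef eg m.
have hN : m - lo f1 - lo g1 < (absz (m - lo f1 - lo g1)%R).+1%:Z by lia.
rewrite (@V_any f1 g1 m (lo f1) (lo g1) _ _ _ hN); try by move=> j hj; rewrite lscoef_below.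
rewrite (@V_any f2 g2 m (lo f1) (lo g1) _ _ _ hN); first last.
- by move=> j hj; rewrite -eg lscoef_below.
- by move=> j hj; rewrite -ef lscoef_below.
by apply: eq_bigr => i _; rewrite ef eg.
Qed.

Lemma lsmulC f g : lscoef (lsmul f g) =1 lscoef (lsmul g f).
Proof.
move=> m; rewrite !lscoef_mul_raw (addrC (lo g)).
by case: (m - _) => // k; rewrite convC.
Qed.

Lemma lsmulA f g h : lscoef (lsmul f (lsmul g h)) =1 lscoef (lsmul (lsmul f g) h).
Proof.
move=> m; rewrite !lscoef_mul_raw /= addrA.
by case: (m - _) => // k; rewrite convA.
Qed.

Lemma lsmul1 f : lscoef (lsmul (ls1 K) f) =1 lscoef f.
Proof.
move=> m; rewrite lscoef_mul_raw /= add0r /lscoef.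
by case: (m - _) => // k; rewrite (conv1l (cf f)).
Qed.

Lemma lsmulDl f g h : lscoef (lsmul (lsadd f g) h) =1
  fun m => lscoef (lsmul f h) m + lscoef (lsmul g h) m.
Proof.
move=> m; set l := Order.min (lo f) (lo g).
have ef : lscoef f =1 lscoef (mkLS l (fun k => lscoef f (l + k%:Z))).
  move=> j; rewrite lscoef_mk_shift; case: ifP => // /negbT hj.
  by rewrite lscoef_below //; lia.
have eg : lscoef g =1 lscoef (mkLS l (fun k => lscoef g (l + k%:Z))).
  move=> j; rewrite lscoef_mk_shift; case: ifP => // /negbT hj.
  by rewrite lscoef_below //; lia.
rewrite (lsmul_wd ef (frefl _)) (lsmul_wd eg (frefl _)).
rewrite !lscoef_mul_raw /=; case: (m - _) => [k|k]; last by rewrite addr0.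
exact: convDl.
Qed.

Lemma lscoef_deriv f m : lscoef (lsderiv f) m = (m + 1)%:~R * lscoef f (m + 1).
Proof.
rewrite /lsderiv lscoef_mk; case E: (m - (lo f - 1)) => [k|k].
  have -> : m + 1 = lo f + k%:Z by lia.
  by rewrite lscoef_lo.
by rewrite lscoef_below ?mulr0 //; lia.
Qed.

End LSlaws.

Section LSder.
Variable K : fieldType.
Implicit Types f g : LS K.
Lemma lsderivM f g m : lscoef (lsderiv (lsmul f g)) m =
  lscoef (lsmul (lsderiv f) g) m + lscoef (lsmul f (lsderiv g)) m.
Proof.
rewrite lscoef_deriv !lscoef_mul_raw /=.
have -> : m - (lo f - 1 + lo g) = m + 1 - (lo f + lo g) by lia.
have -> : m - (lo f + (lo g - 1)) = m + 1 - (lo f + lo g) by lia.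
case E: (m + 1 - (lo f + lo g)) => [k|k]; last by rewrite mulr0 addr0.
rewrite /conv -big_split mulr_sumr; apply: eq_bigr => -[i hi] _ /=.
have -> : (m + 1) = (lo f + i%:Z) + (lo g + (k - i)%N%:Z) by lia.
by rewrite intrD; ring.
Qed.
End LSder.

Section LRdef.
Variable K : fieldType.
Definition LR := {x : int -> K | exists f : LS K, lscoef f =1 x}.
End LRdef.

HB.instance Definition _ (K : fieldType) := gen_eqMixin (LR K).
HB.instance Definition _ (K : fieldType) := gen_choiceMixin (LR K).

Section LRops.
Variable K : fieldType.
Local Notation LR := (LR K).
Implicit Types x y z : LR.

Definition lrv (x : LR) : int -> K := sval x.
Definition rep (x : LR) : LS K := sval (cid (svalP x)).
Lemma repP x : lscoef (rep x) =1 lrv x.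
Proof. exact: (svalP (cid (svalP x))). Qed.

Definition toLR (f : LS K) : LR := exist _ (lscoef f) (ex_intro _ f (frefl _)).
Lemma toLRE f : lrv (toLR f) = lscoef f. Proof. by []. Qed.

Lemma lr_ext x y : lrv x =1 lrv y -> x = y.
Proof.
case: x => x hx; case: y => y hy /= e; apply: eq_exist; exact: funext.
Qed.

Definition lradd x y := toLR (lsadd (rep x) (rep y)).
Definition lropp x := toLR (lsopp (rep x)).
Definition lrmul x y := toLR (lsmul (rep x) (rep y)).
Definition lr0 := toLR (ls0 K).
Definition lr1 := toLR (ls1 K).

Lemma lraddE x y m : lrv (lradd x y) m = lrv x m + lrv y m.
Proof. by rewrite toLRE lscoef_add !repP. Qed.
Lemma lroppE x m : lrv (lropp x) m = - lrv x m.
Proof. by rewrite toLRE lscoef_opp !repP. Qed.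
Lemma lr0E m : lrv lr0 m = 0.
Proof. by rewrite toLRE lscoef0. Qed.
Lemma lr1E m : lrv lr1 m = (m == 0)%:R.
Proof. by rewrite toLRE lscoef1. Qed.

Lemma lraddA : associative lradd.
Proof. by move=> x y z; apply: lr_ext => m; rewrite !lraddE addrA. Qed.
Lemma lraddC : commutative lradd.
Proof. by move=> x y; apply: lr_ext => m; rewrite !lraddE addrC. Qed.
Lemma lradd0 : left_id lr0 lradd.
Proof. by move=> x; apply: lr_ext => m; rewrite !lraddE lr0E add0r. Qed.
Lemma lraddN : left_inverse lr0 lropp lradd.
Proof. by move=> x; apply: lr_ext => m; rewrite !lraddE lroppE lr0E addNr. Qed.

Lemma lrmul_rep x y : lscoef (lsmul (rep x) (rep y)) =1 lrv (lrmul x y).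
Proof. by []. Qed.

Lemma lrmulA : associative lrmul.
Proof.
move=> x y z; apply: lr_ext => m; rewrite !toLRE.
rewrite (lsmul_wd (frefl _) (repP (lrmul y z))) lsmulA.
by rewrite -(lsmul_wd (repP (lrmul x y)) (frefl _)).
Qed.
Lemma lrmulC : commutative lrmul.
Proof. by move=> x y; apply: lr_ext => m; rewrite !toLRE lsmulC. Qed.
Lemma lrmul1 : left_id lr1 lrmul.
Proof.
move=> x; apply: lr_ext => m; rewrite !toLRE.
by rewrite (lsmul_wd (repP lr1) (frefl _)) lsmul1 repP.
Qed.
Lemma lrmulDl : left_distributive lrmul lradd.
Proof.
move=> x y z; apply: lr_ext => m; rewrite lraddE !toLRE.
by rewrite (lsmul_wd (repP (lradd x y)) (frefl _)) lsmulDl.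
Qed.
Lemma lr1_neq0 : lr1 != lr0.
Proof.
apply/eqP => /(congr1 (fun x => lrv x 0)); rewrite lr1E lr0E /=.
by move/eqP; rewrite oner_eq0.
Qed.

End LRops.

HB.instance Definition _ (K : fieldType) :=
  GRing.isZmodule.Build (LR K) (@lraddA K) (@lraddC K) (@lradd0 K) (@lraddN K).
HB.instance Definition _ (K : fieldType) :=
  GRing.Zmodule_isComNzRing.Build (LR K) (@lrmulA K) (@lrmulC K) (@lrmul1 K) (@lrmulDl K) (@lr1_neq0 K).

Section LRtheory.
Variable K : fieldType.
Local Notation LR := (LR K).
Implicit Types x y z : LR.

Lemma lrvD x y m : lrv (x + y) m = lrv x m + lrv y m. Proof. exact: lraddE. Qed.
Lemma lrvN x m : lrv (- x) m = - lrv x m. Proof. exact: lroppE. Qed.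
Lemma lrvB x y m : lrv (x - y) m = lrv x m - lrv y m. Proof. by rewrite lrvD lrvN. Qed.
Lemma lrv0 m : lrv (0 : LR) m = 0. Proof. exact: lr0E. Qed.
Lemma lrv1 m : lrv (1 : LR) m = (m == 0)%:R. Proof. exact: lr1E. Qed.

Lemma toLR_add (f g : LS K) : toLR (lsadd f g) = toLR f + toLR g.
Proof. by apply: lr_ext => m; rewrite lrvD !toLRE lscoef_add. Qed.
Lemma toLR0 : toLR (ls0 K) = 0.
Proof. by apply: lr_ext => m; rewrite toLRE lscoef0 ?lrv0. Qed.
Lemma toLR_mul (f g : LS K) : toLR (lsmul f g) = toLR f * toLR g.
Proof.
apply: lr_ext => m.
change (lscoef (lsmul f g) m = lscoef (lsmul (rep (toLR f)) (rep (toLR g))) m).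
by apply: lsmul_wd => j; rewrite repP.
Qed.
Lemma toLR_opp (f : LS K) : toLR (lsopp f) = - toLR f.
Proof. by apply: lr_ext => m; rewrite lrvN !toLRE lscoef_opp. Qed.

Lemma lrvM x y m a b (N : nat) :
  (forall j, j < a -> lrv x j = 0) -> (forall j, j < b -> lrv y j = 0) ->
  m - a - b < N%:Z ->
  lrv (x * y) m = \sum_(i < N) lrv x (a + i%:Z) * lrv y (m - a - i%:Z).
Proof.
move=> ha hb hN.
change (lscoef (lsmul (rep x) (rep y)) m = \sum_(i < N) lrv x (a + i%:Z) * lrv y (m - a - i%:Z)).
rewrite (@V_any _ _ _ m a b N) //.
- by apply: eq_bigr => i _; rewrite !repP.
- by move=> j hj; rewrite repP ha.
- by move=> j hj; rewrite repP hb.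
Qed.

Lemma lr_bounded x : exists L, forall j, j < L -> lrv x j = 0.
Proof. by exists (lo (rep x)) => j hj; rewrite -repP lscoef_below. Qed.

Definition lrder x : LR := toLR (lsderiv (rep x)).
Lemma lrderE x m : lrv (lrder x) m = (m + 1)%:~R * lrv x (m + 1).
Proof. by rewrite toLRE lscoef_deriv repP. Qed.
Lemma lrderD x y : lrder (x + y) = lrder x + lrder y.
Proof. by apply: lr_ext => m; rewrite lrvD !lrderE !lrvD mulrDr. Qed.
Lemma lrder0 : lrder 0 = 0.
Proof. by apply: lr_ext => m; rewrite lrderE !lrv0 mulr0. Qed.
Lemma lrderN x : lrder (- x) = - lrder x.
Proof. by apply: lr_ext => m; rewrite lrvN !lrderE !lrvN mulrN. Qed.

End LRtheory.

Section X.
Variable K : fieldType.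
Implicit Types x y : LR K.
Lemma lrderM x y : lrder (x * y) = lrder x * y + x * lrder y.
Proof.
apply: lr_ext => m; rewrite lrvD lrderE.
change ((m + 1)%:~R * lscoef (lsmul (rep x) (rep y)) (m + 1) =
  lscoef (lsmul (rep (lrder x)) (rep y)) m + lscoef (lsmul (rep x) (rep (lrder y))) m).
rewrite -lscoef_deriv lsderivM.
congr (_ + _); apply: lsmul_wd => j; rewrite ?repP //= toLRE.
Qed.
End X.

Section Pdef.
Variable K : fieldType.
Record PP := mkP { pco : nat -> LR K }.
End Pdef.

HB.instance Definition _ (K : fieldType) := gen_eqMixin (PP K).
HB.instance Definition _ (K : fieldType) := gen_choiceMixin (PP K).

Section Pops.
Variable K : fieldType.
Local Notation PP := (PP K).
Implicit Types X Y Z : PP.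

Lemma p_ext X Y : (forall n, pco X n = pco Y n) -> X = Y.
Proof. by case: X => x; case: Y => y /= e; congr mkP; apply: funext. Qed.

Definition padd X Y := mkP (fun n => pco X n + pco Y n).
Definition popp X := mkP (fun n => - pco X n).
Definition p0 := mkP (fun _ => (0 : LR K)).
Definition pmul X Y := mkP (conv (pco X) (pco Y)).
Definition p1 := mkP (@delta (LR K)).

Lemma paddA : associative padd.
Proof. by move=> X Y Z; apply: p_ext => n /=; rewrite addrA. Qed.
Lemma paddC : commutative padd.
Proof. by move=> X Y; apply: p_ext => n /=; rewrite addrC. Qed.
Lemma padd0 : left_id p0 padd.
Proof. by move=> X; apply: p_ext => n /=; rewrite add0r. Qed.
Lemma paddN : left_inverse p0 popp padd.
Proof. by move=> X; apply: p_ext => n /=; rewrite addNr. Qed.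
Lemma pmulA : associative pmul.
Proof.
move=> X Y Z; apply: p_ext => n /=; rewrite -convA.
by rewrite /conv; apply: eq_bigr.
Qed.
Lemma pmulC : commutative pmul.
Proof. by move=> X Y; apply: p_ext => n /=; rewrite convC. Qed.
Lemma pmul1 : left_id p1 pmul.
Proof. by move=> X; apply: p_ext => n /=; rewrite conv1l. Qed.
Lemma pmulDl : left_distributive pmul padd.
Proof. by move=> X Y Z; apply: p_ext => n /=; rewrite convDl. Qed.
Lemma p1_neq0 : p1 != p0.
Proof.
apply/eqP => /(congr1 (fun X => pco X 0)) /=; apply/eqP; exact: oner_neq0.
Qed.
End Pops.

HB.instance Definition _ (K : fieldType) :=
  GRing.isZmodule.Build (PP K) (@paddA K) (@paddC K) (@padd0 K) (@paddN K).
HB.instance Definition _ (K : fieldType) :=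
  GRing.Zmodule_isComNzRing.Build (PP K) (@pmulA K) (@pmulC K) (@pmul1 K) (@pmulDl K) (@p1_neq0 K).

Section Ptheory.
Variable K : fieldType.
Local Notation PP := (PP K).
Implicit Types X Y Z : PP.

Lemma pcoD X Y n : pco (X + Y) n = pco X n + pco Y n. Proof. by []. Qed.
Lemma pcoN X n : pco (- X) n = - pco X n. Proof. by []. Qed.
Lemma pcoB X Y n : pco (X - Y) n = pco X n - pco Y n. Proof. by []. Qed.
Lemma pco0 n : pco (0 : PP) n = 0. Proof. by []. Qed.
Lemma pco1 n : pco (1 : PP) n = if n is 0%N then 1 else 0. Proof. by []. Qed.
Lemma pcoM X Y n : pco (X * Y) n = \sum_(k < n.+1) pco X k * pco Y (n - k)%N.
Proof. by []. Qed.
Lemma pcoM0 X Y : pco (X * Y) 0 = pco X 0 * pco Y 0.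
Proof. by rewrite pcoM big_ord1. Qed.

Definition pder X := mkP (fun n => lrder (pco X n)).
Lemma pderD X Y : pder (X + Y) = pder X + pder Y.
Proof. by apply: p_ext => n /=; rewrite lrderD. Qed.
Lemma pderN X : pder (- X) = - pder X.
Proof. by apply: p_ext => n /=; rewrite lrderN. Qed.
Lemma pderB X Y : pder (X - Y) = pder X - pder Y.
Proof. by rewrite pderD pderN. Qed.
Lemma pder0 : pder 0 = 0.
Proof. by apply: p_ext => n /=; rewrite lrder0. Qed.
Lemma lrder_sum n (F : 'I_n -> LR K) : lrder (\sum_(i < n) F i) = \sum_(i < n) lrder (F i).
Proof. by elim/big_rec2: _ => [|i a b _ <-]; rewrite ?lrder0 ?lrderD. Qed.
Lemma pderM X Y : pder (X * Y) = pder X * Y + X * pder Y.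
Proof.
apply: p_ext => n; rewrite pcoD /= lrder_sum -big_split; apply: eq_bigr => i _.
by rewrite lrderM.
Qed.
Lemma lrder1 : lrder (1 : LR K) = 0.
Proof.
apply: lr_ext => m; rewrite lrderE !lrv1 lrv0.
by case: (eqVneq (m + 1) 0) => [->|h]; rewrite ?mul0r ?mulr0.
Qed.
Lemma pder1 : pder 1 = 0.
Proof. by apply: p_ext => -[|n] /=; rewrite ?lrder1 ?lrder0. Qed.

Definition ptheta X := mkP (fun n => pco X n *+ n).
Lemma pthetaD X Y : ptheta (X + Y) = ptheta X + ptheta Y.
Proof. by apply: p_ext => n /=; rewrite mulrnDl. Qed.
Lemma pthetaN X : ptheta (- X) = - ptheta X.
Proof. by apply: p_ext => n /=; rewrite mulNrn. Qed.
Lemma pthetaM X Y : ptheta (X * Y) = ptheta X * Y + X * ptheta Y.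
Proof.
apply: p_ext => n; rewrite pcoD /= /conv -sumrMnl -big_split; apply: eq_bigr => -[i hi] _ /=.
rewrite mulrnAl mulrnAr -mulrnDr; congr (_ *+ _); lia.
Qed.
Lemma ptheta1 : ptheta 1 = 0.
Proof. by apply: p_ext => -[|n] /=; rewrite ?mulr0n ?mul0rn. Qed.
Lemma pder_theta X : pder (ptheta X) = ptheta (pder X).
Proof.
apply: p_ext => n /=; elim: n {1 3}n => [|k IH] n; rewrite ?mulr0n ?lrder0 //.
by rewrite !mulrS lrderD IH.
Qed.
End Ptheory.

Section Res.
Variable K : fieldType.
Local Notation LR := (LR K).
Implicit Types x y u v d e : LR.

Definition hol x := forall m, m < 0 -> lrv x m = 0.

Definition zz : LR := toLR (mkLS 1 (@delta K)).
Definition ww : LR := toLR (mkLS (-1) (@delta K)).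

Lemma lrv_shiftmul (l : int) x m :
  lrv (toLR (mkLS l (@delta K)) * x) m = lrv x (m - l).
Proof.
change (lscoef (lsmul (rep (toLR (mkLS l (@delta K)))) (rep x)) m = lrv x (m - l)).
have ew : lscoef (rep (toLR (mkLS l (@delta K)))) =1 lscoef (mkLS l (@delta K)) := repP _.
rewrite (lsmul_wd ew (frefl _)) lscoef_mul_raw /=.
case E: (m - (l + lo (rep x))) => [k|k].
  rewrite (conv1l (cf (rep x))) -lscoef_lo repP; congr lrv; lia.
by rewrite -repP lscoef_below //; lia.
Qed.

Lemma lrv_mk1 (l m : int) : lrv (toLR (mkLS l (@delta K))) m = (m == l)%:R.
Proof.
rewrite toLRE lscoef_mk; case E: (m - l) => [[|k]|k] /=.
- by rewrite (_ : (m == l) = true) //; apply/eqP; lia.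
- by rewrite (_ : (m == l) = false) //; apply/eqP; lia.
- by rewrite (_ : (m == l) = false) //; apply/eqP; lia.
Qed.

Lemma zzww : zz * ww = 1.
Proof.
apply: lr_ext => m; rewrite lrv_shiftmul lrv_mk1 lrv1.
by congr (nat_of_bool _)%:R; apply/eqP/eqP; lia.
Qed.

Lemma lrder_zz : lrder zz = 1.
Proof.
apply: lr_ext => m; rewrite lrderE lrv_mk1 lrv1.
case: (eqVneq m 0) => [->|h]; first by rewrite /= mul1r.
by rewrite (_ : (m + 1 == 1) = false) ?mulr0 //; apply/eqP; lia.
Qed.

Lemma hol_mul x y : hol x -> hol y -> hol (x * y).
Proof.
move=> hx hy m hm; rewrite (@lrvM _ x y m 0 0 0%N) ?big_ord0 //.
all: try (by move=> j hj; rewrite ?hx ?hy).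
all: lia.
Qed.

Lemma hol_der x : hol x -> hol (lrder x).
Proof.
move=> hx m hm; rewrite lrderE.
case: (eqVneq (m + 1) 0) => [->|h]; first by rewrite mul0r.
by rewrite hx ?mulr0 //; lia.
Qed.

Lemma inv_hol u v : hol u -> lrv u 0 != 0 -> u * v = 1 -> hol v.
Proof.
move=> hu u0 uv.
have [L hL] := lr_bounded v.
suff H : forall j : nat, L + j%:Z < 0 -> lrv v (L + j%:Z) = 0.
  move=> m hm; case: (ltrP m L) => [/hL //|hLm].
  have -> : m = L + (absz (m - L))%:Z by lia.
  by apply: H; lia.
elim/ltn_ind => j IH hj.
have : lrv (u * v) (L + j%:Z) = 0.
  by rewrite uv lrv1 (_ : (L + j%:Z == 0) = false) //; apply/eqP; lia.
rewrite (@lrvM _ u v (L + j%:Z) 0 L j.+1); first last.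
- by lia.
- exact: hL.
- by move=> i hi; rewrite hu.
rewrite big_ord_recl big1 ?addr0.
  by move=> /eqP; rewrite mulf_eq0 (negbTE u0) /= => /eqP.
move=> i _; rewrite lift0.
have -> : L + j%:Z - (i.+1)%:Z = L + (j - i.+1)%N%:Z.
  by have := ltn_ord i; lia.
rewrite IH ?mulr0 //.
  by have := ltn_ord i; lia.
by have := ltn_ord i; lia.
Qed.

Lemma res_lemma d e : hol d -> lrv d 0 = 0 -> lrv d 1 != 0 -> d * e = 1 ->
  lrv (lrder d * e) (-1) = 1.
Proof.
move=> hd d0 d1 de.
set u := ww * d.
have hu : hol u.
  move=> m hm; rewrite /u lrv_shiftmul.
  case: (eqVneq (m - -1) 0) => [->//|h]; apply: hd; lia.
have u0 : lrv u 0 != 0 by rewrite /u lrv_shiftmul sub0r opprK.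
have dE : d = zz * u by rewrite /u mulrA zzww mul1r.
set v := zz * e.
have uv : u * v = 1.
  have -> : u * v = (zz * ww) * (d * e) by rewrite /u /v; ring.
  by rewrite zzww de mul1r.
have eE : e = ww * v.
  have -> : ww * v = (zz * ww) * e by rewrite /v; ring.
  by rewrite zzww mul1r.
have hv := inv_hol hu u0 uv.
have -> : lrder d * e = ww + lrder u * v.
  rewrite dE lrderM lrder_zz mul1r eE.
  have -> : (u + zz * lrder u) * (ww * v) = ww * (u * v) + (zz * ww) * (lrder u * v) by ring.
  by rewrite uv zzww !mul1r mulr1.
rewrite lrvD lrv_mk1 eqxx hol_mul ?addr0 //.
exact: hol_der.
Qed.
End Res.

Section Phi.
Variable K : fieldType.
Local Notation PP := (PP K).
Implicit Types F G : PS K.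

Definition phi F : PP := mkP (fun n => toLR (F n)).

Lemma phi_add F G : phi (psadd F G) = phi F + phi G.
Proof. by apply: p_ext => n; rewrite pcoD /= toLR_add. Qed.
Lemma phi_opp F : phi (psopp F) = - phi F.
Proof. by apply: p_ext => n; rewrite pcoN /= toLR_opp. Qed.
Lemma phi0 : phi (ps0 K) = 0.
Proof. by apply: p_ext => n /=; rewrite toLR0. Qed.
Lemma phi1 : phi (ps1 K) = 1.
Proof. by apply: p_ext => -[|n] /=; rewrite ?toLR0. Qed.
Lemma phi_mul F G : phi (psmul F G) = phi F * phi G.
Proof.
apply: p_ext => n; rewrite pcoM /= /psmul.
elim/big_rec2: _ => [|i a b _ <-]; first by rewrite toLR0.
by rewrite toLR_add toLR_mul.
Qed.
Definition plam (X : PP) : PP := mkP (fun n => if n is n'.+1 then pco X n' else 0).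
Lemma phi_lam F : phi (pslam F) = plam (phi F).
Proof. by apply: p_ext => -[|n] /=; rewrite ?toLR0. Qed.
Lemma plamD (X Y : PP) : plam (X + Y) = plam X + plam Y.
Proof. by apply: p_ext => -[|n] /=; rewrite ?addr0. Qed.
Lemma phi_der F : phi (psderiv F) = pder (phi F).
Proof.
apply: p_ext => n /=; apply: lr_ext => m; rewrite lrderE !toLRE lscoef_deriv //.
Qed.
Lemma phi_sum (T : 'I_2 -> PS K) :
  phi (\big[@psadd K/ps0 K]_(k < 2) T k) = \sum_(k < 2) phi (T k).
Proof. by elim/big_rec2: _ => [|i a b _ <-]; rewrite ?phi0 ?phi_add. Qed.
Lemma sum2 (T : 'I_2 -> PP) : \sum_(k < 2) T k = T ord0 + T ord_max.
Proof. by rewrite big_ord_recr big_ord1; congr (T _ + T _); apply: val_inj. Qed.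
Lemma phi_eq F G : pseq F G -> phi F = phi G.
Proof. by move=> e; apply: p_ext => n; apply: lr_ext => m; exact: e. Qed.
Lemma lrv_phi F n m : lrv (pco (phi F) n) m = pscoef F n m.
Proof. by []. Qed.
Lemma lrvMn (x : LR K) k m : lrv (x *+ k) m = lrv x m *+ k.
Proof. by elim: k => [|k IH]; rewrite ?lrv0 // !mulrS lrvD IH. Qed.
Lemma hol_sub (x y : LR K) : hol x -> hol y -> hol (x - y).
Proof. by move=> hx hy m hm; rewrite lrvB hx ?hy ?subr0. Qed.

End Phi.

Section Alg.
Variable T : comNzRingType.
Variables (der th : T -> T).
Hypothesis derB : forall x y, der (x - y) = der x - der y.
Hypothesis derM : forall x y, der (x * y) = der x * y + x * der y.
Hypothesis der1 : der 1 = 0.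
Hypothesis thM : forall x y, th (x * y) = th x * y + x * th y.
Hypothesis th1 : th 1 = 0.
Hypothesis derth : forall x, der (th x) = th (der x).

Lemma alg (r00 r01 r10 r11 s00 s01 s10 s11 a00 a01 a10 a11 D E Q : T) :
  r00 * s00 + r01 * s10 = 1 -> r00 * s01 + r01 * s11 = 0 ->
  r10 * s00 + r11 * s10 = 0 -> r10 * s01 + r11 * s11 = 1 ->
  s00 * r00 + s01 * r10 = 1 -> s00 * r01 + s01 * r11 = 0 ->
  s10 * r00 + s11 * r10 = 0 -> s10 * r01 + s11 * r11 = 1 ->
  D = r00 * r11 - r01 * r10 ->
  E = s00 * s11 - s01 * s10 ->
  Q = (s00 * der r00 + s01 * der r10) + (s10 * der r01 + s11 * der r11) ->
  [/\ D * E = 1, Q = der D * E, th Q = der (th D * E) &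
   ((s00*a00 + s01*a10)*r00 + (s00*a01 + s01*a11)*r10) +
   ((s10*a00 + s11*a10)*r01 + (s10*a01 + s11*a11)*r11) = a00 + a11].
Proof.
move=> c00 c01 c10 c11 e00 e01 e10 e11 hD hE hQ.
have DE : D * E = 1.
  have -> : D * E = (r00 * s00 + r01 * s10) * (r10 * s01 + r11 * s11)
     - (r00 * s01 + r01 * s11) * (r10 * s00 + r11 * s10) by rewrite hD hE; ring.
  by rewrite c00 c01 c10 c11 mulr0 subr0 mulr1.
have dD : der D = der r00 * r11 + r00 * der r11 - (der r01 * r10 + r01 * der r10).
  by rewrite hD derB !derM.
have QD : Q * D = der D.
  apply/eqP; rewrite -subr_eq0; apply/eqP.
  have -> : Q * D - der D =
    (s00 * r00 + s01 * r10 - 1) * (r11 * der r00 - r01 * der r10)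
    + (s00 * r01 + s01 * r11) * (- r10 * der r00 + r00 * der r10)
    + (s10 * r00 + s11 * r10) * (r11 * der r01 - r01 * der r11)
    + (s10 * r01 + s11 * r11 - 1) * (- r10 * der r01 + r00 * der r11).
    by rewrite dD hQ hD; ring.
  by rewrite e00 e01 e10 e11 !subrr !mul0r !addr0.
have QE : Q = der D * E.
  by rewrite -QD -mulrA DE mulr1.
split => //.
- have h1 : th D * E + D * th E = 0 by rewrite -thM DE th1.
  have h2 : der D * E + D * der E = 0 by rewrite -derM DE der1.
  have tE : th E = - (E * E * th D).
    apply/eqP; rewrite -subr_eq0 opprK; apply/eqP.
    transitivity (E * (th D * E + D * th E) + th E * (1 - D * E)); first by ring.
    by rewrite h1 DE subrr !mulr0 addr0.
  have dE : der E = - (E * E * der D).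
    apply/eqP; rewrite -subr_eq0 opprK; apply/eqP.
    transitivity (E * (der D * E + D * der E) + der E * (1 - D * E)); first by ring.
    by rewrite h2 DE subrr !mulr0 addr0.
  rewrite QE thM derM tE dE derth; ring.
- have -> : ((s00*a00 + s01*a10)*r00 + (s00*a01 + s01*a11)*r10) +
   ((s10*a00 + s11*a10)*r01 + (s10*a01 + s11*a11)*r11) =
   a00 * (r00 * s00 + r01 * s10) + a01 * (r10 * s00 + r11 * s10)
   + a10 * (r00 * s01 + r01 * s11) + a11 * (r10 * s01 + r11 * s11) by ring.
  by rewrite c00 c01 c10 c11 !mulr0 !mulr1 !addr0.
Qed.
End Alg.

Lemma gen_rearr (T : zmodType) (x y p q : T) : x + y = (x + p) + (y + q) - (p + q).
Proof. by rewrite addrACA addrK. Qed.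

Lemma key_abs (T : zmodType) (lam : T -> T) (lamD : forall x y, lam (x + y) = lam x + lam y)
  (trA trG G0 G1 t0 t1 q0 q1 a0 a1 : T) : trA = a0 + a1 -> trG = G0 + G1 ->
  G0 = t0 + lam q0 -> G1 = t1 + lam q1 -> t0 + t1 = a0 + a1 -> trA = trG - lam (q0 + q1).
Proof. by move=> -> -> -> -> <-; rewrite lamD -gen_rearr. Qed.

Arguments key_abs {T lam} lamD {trA trG G0 G1 t0 t1 q0 q1 a0 a1}.

Lemma lscoef_res (K : fieldType) (c : K) m :
  lscoef (mkLS 0 (fun k => if k is 0%N then c else 0)) m = (m == 0)%:R * c.
Proof. by rewrite lscoef_mk subr0; case: m => [[|k]|k] /=; rewrite ?mul1r ?mul0r. Qed.

Theorem lemma4p12 (R : realType) (A Rm S : M2 R[i]) :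
  (* R is in GL_2(C((z))[[lambda]]) with inverse S *)
  m2eq (m2mul Rm S) (m2one _) -> m2eq (m2mul S Rm) (m2one _) ->
  (* (1) A is diagonal *)
  m2diag A ->
  (* (2) R(z,0) has entries in C[[z]] *)
  (forall i j m, (m < 0)%R -> pscoef (Rm i j) 0 m = 0) ->
  (* (3) det R(z,0) has a first-order zero at z = 0 *)
  pscoef (m2det Rm) 0 0 = 0 -> pscoef (m2det Rm) 0 1 != 0 ->
  (* (4) R^{-1} A R + lambda R^{-1} dR/dz has entries in C[[z, lambda]] *)
  (forall i j, ps_holo (gauge S A Rm i j)) ->
  (* conclusion: res_{z=0} tr A = - lambda *)
  pseq (psres (m2tr A)) (psopp (pslambda R[i])).
Proof.
move=> hRS hSR _ hR0 hd0 hd1 hhol.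
pose i0 : 'I_2 := ord0; pose i1 : 'I_2 := ord_max.
have h01 : (i0 == i1) = false by [].
have h10 : (i1 == i0) = false by [].
have cRS : forall i j, phi (Rm i i0) * phi (S i0 j) + phi (Rm i i1) * phi (S i1 j)
    = if i == j then 1 else 0.
  move=> i j; have := phi_eq (hRS i j); rewrite /m2mul phi_sum sum2 !phi_mul /m2one => ->.
  by case: (i == j); rewrite ?phi1 ?phi0.
have cSR : forall i j, phi (S i i0) * phi (Rm i0 j) + phi (S i i1) * phi (Rm i1 j)
    = if i == j then 1 else 0.
  move=> i j; have := phi_eq (hSR i j); rewrite /m2mul phi_sum sum2 !phi_mul /m2one => ->.
  by case: (i == j); rewrite ?phi1 ?phi0.
have c00 := cRS i0 i0; have c01 := cRS i0 i1; have c10 := cRS i1 i0; have c11 := cRS i1 i1.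
have e00 := cSR i0 i0; have e01 := cSR i0 i1; have e10 := cSR i1 i0; have e11 := cSR i1 i1.
rewrite eqxx in c00 c11 e00 e11.
rewrite h01 in c01 e01; rewrite h10 in c10 e10.
set D := phi (Rm i0 i0) * phi (Rm i1 i1) - phi (Rm i0 i1) * phi (Rm i1 i0).
set E := phi (S i0 i0) * phi (S i1 i1) - phi (S i0 i1) * phi (S i1 i0).
set Q := (phi (S i0 i0) * pder (phi (Rm i0 i0)) + phi (S i0 i1) * pder (phi (Rm i1 i0)))
       + (phi (S i1 i0) * pder (phi (Rm i0 i1)) + phi (S i1 i1) * pder (phi (Rm i1 i1))).
have [DE QE thQ trE] := alg (@pderB _) (@pderM _) (@pder1 _) (@pthetaM _) (@ptheta1 _)
  (@pder_theta _) (phi (A i0 i0)) (phi (A i0 i1)) (phi (A i1 i0)) (phi (A i1 i1))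
  c00 c01 c10 c11 e00 e01 e10 e11 (erefl D) (erefl E) (erefl Q).
have phiD : phi (m2det Rm) = D by rewrite /m2det phi_add phi_opp !phi_mul.
have phiG : forall i, phi (gauge S A Rm i i) =
    ((phi (S i i0) * phi (A i0 i0) + phi (S i i1) * phi (A i1 i0)) * phi (Rm i0 i)
     + (phi (S i i0) * phi (A i0 i1) + phi (S i i1) * phi (A i1 i1)) * phi (Rm i1 i))
    + plam (phi (S i i0) * pder (phi (Rm i0 i)) + phi (S i i1) * pder (phi (Rm i1 i))).
  move=> i; rewrite /gauge /m2add /m2lam phi_add phi_lam /m2mul !phi_sum !sum2 !phi_mul.
  by rewrite !phi_sum !sum2 !phi_mul /m2deriv !phi_der.
have key : phi (m2tr A) = phi (m2tr (gauge S A Rm)) - plam Q.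
  have := key_abs (@plamD _) (phi_add (A i0 i0) (A i1 i1))
     (phi_add (gauge S A Rm i0 i0) (gauge S A Rm i1 i1)) (phiG i0) (phiG i1) trE.
  by [].
have holR : forall i j, hol (pco (phi (Rm i j)) 0).
  by move=> i j m hm; rewrite lrv_phi hR0.
have hQ0 : lrv (pco Q 0) (-1) = 1.
  rewrite QE pcoM0; apply: res_lemma.
  - rewrite /D pcoB !pcoM0; apply: hol_sub; apply: hol_mul; exact: holR.
  - by rewrite -phiD lrv_phi.
  - by rewrite -phiD lrv_phi.
  - by rewrite -pcoM0 DE.
have hQn : forall n, lrv (pco Q n.+1) (-1) = 0.
  move=> n; have := congr1 (fun X => lrv (pco X n.+1) (-1)) thQ.
  rewrite (_ : pco (ptheta Q) n.+1 = pco Q n.+1 *+ n.+1) //.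
  rewrite (_ : forall Y, pco (pder Y) n.+1 = lrder (pco Y n.+1)) //.
  rewrite lrvMn lrderE (_ : (-1 + 1)%:~R = 0 :> R[i]) ?mul0r; last by [].
  by move/eqP; rewrite mulrn_eq0 /= => /eqP.
move=> n m.
rewrite /pscoef /psres lscoef_res.
have -> : lscoef (m2tr A n) (-1) = lrv (pco (phi (m2tr A)) n) (-1) by [].
have g0 := hhol ord0 ord0 n (-1) isT; have g1 := hhol ord_max ord_max n (-1) isT.
have hT : pscoef (m2tr (gauge S A Rm)) n (-1) = 0.
  by rewrite /pscoef /m2tr lscoef_add; rewrite /pscoef in g0 g1; rewrite g0 g1 addr0.
rewrite key pcoB lrvB lrv_phi hT sub0r.
have -> : lrv (pco (plam Q) n) (-1) = (if n is n'.+1 then (if n' is 0%N then 1 else 0) else 0).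
  by clear g0 g1 hT; case: n => [|[|n]]; [exact: lrv0 | exact: hQ0 | exact: hQn].
rewrite /psopp lscoef_opp /pslambda.
clear g0 g1 hT; case: n => [|[|n]].
- by rewrite (_ : pslam (ps1 R[i]) 0 = ls0 R[i]) // lscoef0 !oppr0 mulr0.
- by rewrite (_ : pslam (ps1 R[i]) 1 = ls1 R[i]) // lscoef1 mulrN mulr1.
- by rewrite (_ : pslam (ps1 R[i]) n.+2 = ls0 R[i]) // lscoef0 !oppr0 mulr0.
Qed.
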